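(* Let $n,k,d$ be integers with $k < d \le n-1$, put $q = d-k+1$, and suppose $n = (t-1)q + s$ for integers $t > 1$ and $1 \le s \le d-k$. Let $\alpha = q^t$. Let $\mathcal{N} = \{(j,\theta): j\in[t-1],\ \theta\in\{0,\dots,q-1\}\} \cup \{(t,\theta): \theta\in\{0,\dots,s-1\}\}$ (so $|\mathcal{N}| = n$), and index node $(j,\theta)$ by $\iota(j,\theta) = (j-1)q+\theta+1 \in [n]$. Let $\mathbb{F}_Q$ be a finite field, let $a_1,\dots,a_{n-k},b_1,\dots,b_n$ be $2n-k$ distinct elements of $\mathbb{F}_Q$, and let $H_{MDS}$ be the $(n-k)\times n$ Cauchy matrix with entries $(H_{MDS})_{r,m} = \frac{1}{a_r - b_m}$. For $\rho \in \mathbb{F}_Q$, define the $(n-k)\alpha \times n\alpha$ matrix $\mathbf{H}_\rho = H_{MDS}\otimes \mathbf{I}_\alpha + \mathbf{E}^{\rho}$ as follows. Rows are indexed by pairs $(r,x)$ with $r\in[n-k]$, $x=(x_1,\dots,x_t)\in\{0,\dots,q-1\}^t$; columns are indexed by pairs $(v,y)$ with $v\in\mathcal{N}$, $y\in\{0,\dots,q-1\}^t$ (the column block of node $v$ being the $\iota(v)$-th block of $\alpha$ columns, with a fixed ordering of $\{0,\dots,q-1\}^t$ used consistently for rows and columns within blocks). Then $$(\mathbf{H}_\rho)_{(r,x),(v,y)} = \frac{1}{a_r - b_{\iota(v)}}\,\mathbb{1}_{\{x=y\}} + \rho\cdot \mathbb{1}_{\{r>n-d\ \text{and}\ \exists j\in[t]:\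 v=(j,x_j),\ y = x - \Delta e_j\}},$$ where $\Delta = r-(n-d)\in[1,d-k]$, $e_j$ is the $j$-th unit vector, and $x-\Delta e_j$ is computed coordinatewise modulo $q$ (for $j=t$ the condition can only hold when $x_t < s$, since node $(t,x_t)$ exists only then). Let $\mathcal{C}_\rho = \{\mathbf{c}\in\mathbb{F}_Q^{n\alpha} : \mathbf{H}_\rho \mathbf{c} = 0\}$. Then, if $Q$ is sufficiently large, there exists $\rho\in\mathbb{F}_Q^{\ast}$ such that $\mathcal{C}_\rho$ is an MDS vector code, i.e., an $[n, k\alpha, d_{\min}, \alpha]_Q$ linear vector code with $d_{\min} = n-k+1$.
   Context: A vector $\mathbf{c}\in\mathbb{F}_Q^{n\alpha}$ is viewed as $n$ vector symbols $\mathbf{c}_m = (c_{(m-1)\alpha+1},\dots,c_{m\alpha})$, $m\in[n]$ (the $m$-th symbol being the contents of the node $v$ with $\iota(v)=m$). The Hamming distance between $\mathbf{x},\mathbf{y}\in\mathbb{F}_Q^{n\alpha}$ is $d_H(\mathbf{x},\mathbf{y}) = \sum_{m=1}^n \mathbb{1}_{\{\mathbf{x}_m\neq \mathbf{y}_m\}}$. A linear subspace $\mathcal{C}\subseteq\mathbb{F}_Q^{n\alpha}$ of $\mathbb{F}_Q$-dimension $K$ with minimum (nonzero-pair) distance $d_{\min}$ under $d_H$ is called an $[n,K,d_{\min},\alpha]_Q$ vector code. $\mathbf{I}_\alpha$ is the $\alpha\times\alpha$ identity matrix and $\otimes$ the Kronecker product. $[m]=\{1,\dots,m\}$, and $\mathbb{1}_{\{\cdot\}}$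 is the indicator function. *)

(* Defs.v *)
From HB Require Import structures.
From mathcomp Require Import all_boot all_order all_algebra.
Set Implicit Arguments. Unset Strict Implicit. Unset Printing Implicit Defensive.
Import GRing.Theory.
Local Open Scope ring_scope.
Local Open Scope nat_scope.

(* Elements x = (x_1,...,x_t) of {0,...,q-1}^t (coordinates 0-indexed). *)
Definition word (t q : nat) := {ffun 'I_t -> 'I_q}.

(* y = x - D e_j, computed coordinatewise modulo q (j 0-indexed). *)
Definition shift_cond (t q : nat) (j : 'I_t) (D : nat) (x y : word t q) : bool :=
  [forall j' : 'I_t,
     if j' == j then val (y j') == (x j + q - D) %% q else y j' == x j'].

(* Row index (r,x): r : 'I_(n-k) stands for r+1 in [n-k].
   Column index (v,y): v : 'I_n stands for the node with iota(v) = v+1;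
   node (j,theta) (j 1-indexed) has 0-indexed position (j-1)q + theta.
   With j 0-indexed, "v = (j, x_j)" reads  val v = j*q + x_j. *)
Definition Hentry (F : fieldType) (n k d t : nat)
    (a : 'I_(n-k) -> F) (b : 'I_n -> F) (rho : F)
    (rx : 'I_(n-k) * word t (d-k+1)) (vy : 'I_n * word t (d-k+1)) : F :=
  let q := (d - k + 1)%N in
  let (r, x) := rx in
  let (v, y) := vy in
  ((a r - b v)^-1 * (x == y)%:R
   + rho * ((n - d <= r)%N &&
            [exists j : 'I_t, (val v == j * q + x j)%N
                              && shift_cond j (r.+1 - (n - d)) x y])%:R)%R.

Definition row_ix (n k d t : nat) := ('I_(n-k) * word t (d-k+1))%type.
Definition col_ix (n k d t : nat) := ('I_n * word t (d-k+1))%type.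

(* H_rho as an honest matrix; rows/columns ordered by the (lexicographic)
   enumeration of the index types, so node v occupies a contiguous block. *)
Definition Hmat (F : fieldType) (n k d t : nat)
    (a : 'I_(n-k) -> F) (b : 'I_n -> F) (rho : F)
  : 'M[F]_(#|{: row_ix n k d t}|, #|{: col_ix n k d t}|) :=
  \matrix_(i, j) @Hentry F n k d t a b rho (enum_val i) (enum_val j).


Definition in_code (F : fieldType) (m N : nat) (H : 'M[F]_(m, N)) (c : 'rV[F]_N) : bool :=
  (c *m H^T == 0)%R.

Definition code_dim (F : fieldType) (m N : nat) (H : 'M[F]_(m, N)) : nat :=
  \rank (kermx H^T).

Definition symbol (F : fieldType) (n : nat) (T : finType)
    (c : 'rV[F]_#|{: 'I_n * T}|) (m : 'I_n) : {ffun T -> F} :=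
  [ffun y => c ord0 (enum_rank (m, y))].

Definition dH (F : fieldType) (n : nat) (T : finType)
    (c c' : 'rV[F]_#|{: 'I_n * T}|) : nat :=
  #|[set m : 'I_n | symbol c m != symbol c' m]|.

Definition is_vector_code (F : fieldType) (n : nat) (T : finType) (mr : nat)
    (H : 'M[F]_(mr, #|{: 'I_n * T}|)) (K dmin : nat) : Prop :=
  code_dim H = K /\
  (forall c c', in_code H c -> in_code H c' -> c != c' -> (dmin <= dH c c')%N) /\
  (exists c c', [/\ in_code H c, in_code H c', c != c' & dH c c' = dmin]).

(* Main.v *)
Require Import Defs.
From HB Require Import structures.
From mathcomp Require Import all_boot all_order all_algebra fingroup perm.
From mathcomp Require Import zify.
From mathcomp.algebra_tactics Require Import ring.
Set Implicit Arguments. Unset Strict Implicit. Unset Printing Implicit Defensive.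
Import GRing.Theory.
Local Open Scope ring_scope.

Section Gen.
Variable F : fieldType.

Definition lpoly m (A0 A1 : 'M[F]_m) : {poly F} :=
  \det (map_mx polyC A0 + 'X *: map_mx polyC A1).

Lemma size_lpoly m (A0 A1 : 'M[F]_m) : (size (lpoly A0 A1) <= m.+1)%N.
Proof.
rewrite /lpoly /determinant.
apply: (leq_trans (size_sum _ _ _)).
set B := (map_mx polyC A0 + 'X *: map_mx polyC A1).
have hB : forall i j, (size (B i j) <= 2)%N.
  move=> i j; rewrite !mxE.
  apply: (leq_trans (size_polyD _ _)); rewrite geq_max.
  rewrite (leq_trans (size_polyC_leq1 _)) //=.
  apply: (leq_trans (size_polyMleq _ _)); rewrite size_polyX.
  by have := size_polyC_leq1 (A1 i j); case: (size _) => [|[|]].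
apply/bigmax_leqP => s _.
apply: (leq_trans (size_polyMleq _ _)).
have h1 : (size ((-1) ^+ (odd_perm s) : {poly F}) <= 1)%N.
  by case: (odd_perm s); rewrite ?expr1 ?expr0 ?size_polyN size_poly1.
have h2 : (size (\prod_i B i (s i))%R <= m.+1)%N.
  apply: (leq_trans (size_poly_prod_leq _ _)).
  have hs : (\sum_(i < m) size (B i (s i)) <= \sum_(i < m) 2)%N.
    by apply: leq_sum => i _.
  rewrite sum_nat_const card_ord in hs.
  rewrite cardE /= size_enum_ord.
  move: hs; rewrite muln2 -addnn => hs.
  move: hs; set S := (\sum_(i < m) _)%N; lia.
move: h1 h2; set x := size _; set y := size _; lia.
Qed.

Lemma lpoly_eval m (A0 A1 : 'M[F]_m) x : (lpoly A0 A1).[x] = \det (A0 + x *: A1).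
Proof.
rewrite /lpoly -horner_evalE -det_map_mx; congr (\det _).
by apply/matrixP => i j; rewrite !mxE /= horner_evalE !hornerE.
Qed.

End Gen.

Lemma avoid_roots (F : finFieldType) (I : finType) (p : I -> {poly F}) m :
  (forall i, p i != 0) -> (forall i, (size (p i) <= m.+1)%N) ->
  (#|I| * m + 2 <= #|{: F}|)%N ->
  exists x : F, x != 0 /\ forall i, (p i).[x] != 0.
Proof.
move=> pnz psz hF.
pose P := 'X * \prod_i p i.
have Pnz : P != 0 by rewrite mulf_neq0 ?polyX_eq0 // prodf_seq_neq0; apply/allP => i _; apply: pnz.
have hs : (size P <= #|I| * m + 2)%N.
  apply: (leq_trans (size_polyMleq _ _)); rewrite size_polyX.
  have := size_poly_prod_leq predT p.
  have : (\sum_(i | predT i) size (p i) <= \sum_(i : I | predT i) m.+1)%N.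
    by apply: leq_sum => i _; exact: psz.
  rewrite sum_nat_const.
  set S := (\sum_(i | predT i) _)%N; set c := #|predT|.
  have -> : c = #|I| by rewrite /c; apply: eq_card.
  move=> h1 h2; have h3 : (size (\prod_i p i)%R <= S.+1 - #|I|)%N := h2.
  move: h3 h1; rewrite mulnS; set z := size _; set y := (#|I| * m)%N; lia.
have [x Px] : exists x, P.[x] != 0.
  apply/existsP; rewrite -negb_forall; apply/negP => /forallP allr.
  have := max_poly_roots Pnz (rs := enum F).
  rewrite enum_uniq; move/(_ _ isT).
  have -> : all (root P) (enum F) by apply/allP => x _; have := allr x; rewrite /root; by case: (P.[x] == 0).
  move/(_ isT); rewrite -cardE => h.
  have e : #|{: F}| = #|F| by apply: eq_card.
  move: hF hs h; rewrite e => a b c; by rewrite ltnNge (leq_trans b a) in c.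
exists x; move: Px; rewrite hornerM hornerX horner_prod mulf_eq0 negb_or prodf_seq_eq0 => /andP[-> h]; split=> // i.
by apply: contra h => hi; apply/hasP; exists i; rewrite ?mem_index_enum.
Qed.

Lemma cauchy (F : fieldType) N (a b w : 'I_N -> F) :
  injective a -> injective b -> (forall r l, a r != b l) ->
  (forall r, \sum_l w l * (a r - b l)^-1 = 0) -> forall l, w l = 0.
Proof.
move=> ia ib ab hw l0.
pose Q l := \prod_(l' | l' != l) ('X - (b l')%:P).
pose P := \sum_l w l *: Q l.
have QE x l : (Q l).[x] = \prod_(l' | l' != l) (x - b l').
  by rewrite /Q horner_prod; apply: eq_bigr => i _; rewrite hornerXsubC.
have szP : (size P <= N)%N.
  apply: (leq_trans (size_sum _ _ _)); apply/bigmax_leqP => l _.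
  apply: (leq_trans (size_scale_leq _ _)).
  apply: (leq_trans (size_poly_prod_leq _ _)).
  rewrite (eq_bigr (fun _ => 2%N)); last by move=> i _; rewrite size_XsubC.
  rewrite sum_nat_const.
  have := cardC1 l; rewrite card_ord.
  have -> : #|(fun i : 'I_N => i != l)| = #|predC1 l| by apply: eq_card.
  move=> ->; have := ltn_ord l; lia.
have P0 : P = 0.
  apply: (@roots_geq_poly_eq0 _ P (map a (enum 'I_N))).
  - apply/allP => x /mapP [r _ ->]; rewrite /root /P horner_sum.
    have := hw r.
    have hnz : \prod_l (a r - b l) != 0.
      by rewrite prodf_seq_neq0; apply/allP => l _ /=; rewrite subr_eq0.
    move=> h; apply/eqP; transitivity (\prod_l (a r - b l) * \sum_l w l * (a r - b l)^-1); last by rewrite h mulr0.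
    rewrite mulr_sumr; apply: eq_bigr => l _; rewrite hornerZ QE [in RHS](bigD1 l) //=.
    have hu : a r - b l != 0 by rewrite subr_eq0.
    by field.
  - by rewrite map_inj_uniq ?enum_uniq.
  - by rewrite size_map size_enum_ord.
have := congr1 (horner^~ (b l0)) P0; rewrite /P horner_sum hornerC (bigD1 l0) //=.
rewrite big1 ?addr0; last first.
  move=> l hl; rewrite hornerZ QE (bigD1 l0) //=; last by rewrite eq_sym.
  by rewrite subrr mul0r mulr0.
rewrite hornerZ QE => /eqP; rewrite mulf_eq0 => /orP[/eqP //|].
rewrite prodf_seq_eq0 => /hasP [l /= _ /andP [hl]]; rewrite subr_eq0 => /eqP/ib e.
by rewrite e eqxx in hl.
Qed.

Section Main.
Variables (F : fieldType) (n k d t : nat).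
Variables (a : 'I_(n-k) -> F) (b : 'I_n -> F).
Local Notation R := (row_ix n k d t).
Local Notation C := (col_ix n k d t).
Local Notation H := (@Hmat F n k d t a b).

Definition phi (g : 'I_(n-k) -> 'I_n) (p : R) : C := (g p.1, p.2).

Definition Psel g : 'M[F]_(#|{:R}|, #|{:C}|) :=
  \matrix_(i, j) (enum_val j == phi g (enum_val i))%:R.

Lemma PselE g m (X : 'M[F]_(m, #|{:C}|)) i i' :
  (Psel g *m X^T) i i' = X i' (enum_rank (phi g (enum_val i))).
Proof.
rewrite mxE (bigD1 (enum_rank (phi g (enum_val i)))) //= !mxE enum_rankK eqxx mul1r.
rewrite big1 ?addr0 // => j hj; rewrite !mxE.
case: eqP => e; last by rewrite mul0r.
by move: hj; rewrite -e enum_valK eqxx.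
Qed.

Lemma phi_inj g : injective g -> injective (phi g).
Proof. by move=> ig [l y] [l' y'] [/ig -> ->]. Qed.

Lemma Hdecomp rho : H rho = H 0 + rho *: (H 1 - H 0).
Proof.
apply/matrixP => i j; rewrite !mxE /Hentry.
case: (enum_val i) => r x; case: (enum_val j) => v y /=.
ring.
Qed.

Lemma HentryE rho r x l y g :
  Hentry a b rho (r, x) (phi g (l, y)) =
  (a r - b (g l))^-1 * (x == y)%:R + rho * ((n - d <= r)%N &&
            [exists j : 'I_t, (val (g l) == j * (d-k+1) + x j)%N
                              && shift_cond j (r.+1 - (n - d)) x y])%:R.
Proof. by []. Qed.


Hypothesis ia : injective a.
Hypothesis ib : injective b.
Hypothesis hab : forall r m, a r != b m.



Lemma B0_unit g : injective g -> (Psel g *m (H 0)^T) \in unitmx.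
Proof.
move=> ig; rewrite -row_free_unit; apply: inj_row_free => u hu.
have hrow : forall r x, \sum_l u ord0 (enum_rank (l, x)) * (a r - b (g l))^-1 = 0.
  move=> r x; move/rowP: hu => /(_ (enum_rank ((r, x) : R))).
  rewrite !mxE => h; apply: (etrans _ h).
  under [RHS]eq_bigr => i _ do rewrite PselE mxE !enum_rankK.
  rewrite (reindex (@enum_rank R)) /=; last by apply: onW_bij; exact: enum_rank_bij.
  rewrite [RHS](eq_bigr (fun p : R => u ord0 (enum_rank (p.1, p.2)) * ((a r - b (g p.1))^-1 * (x == p.2)%:R))); last first.
    by move=> [l y] _; rewrite enum_rankK /= mul0r addr0.
  rewrite -(pair_bigA _ (fun l y => u ord0 (enum_rank (l, y)) * ((a r - b (g l))^-1 * (x == y)%:R))) /=.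
  apply: eq_bigr => l _.
  rewrite (bigD1 x) //= eqxx mulr1 big1 ?addr0 // => y hy.
  by rewrite eq_sym (negbTE hy) mulr0 mulr0.
apply/rowP => i; rewrite mxE -(enum_valK i); case: (enum_val i) => l x.
have := @cauchy _ _ a (fun l => b (g l)) (fun l => u ord0 (enum_rank ((l, x) : R))) ia.
apply => //; first by move=> ? ? /ib /ig.
Qed.


Lemma uE g (c : 'rV[F]_#|{:C}|) i :
  (c *m (Psel g)^T) ord0 i = c ord0 (enum_rank (phi g (enum_val i))).
Proof. by rewrite -[c *m _]trmxK trmx_mul trmxK mxE PselE. Qed.

Lemma ker_zero g rho (c : 'rV[F]_#|{:C}|) : injective g ->
  (Psel g *m (H rho)^T) \in unitmx -> c *m (H rho)^T = 0 ->
  (forall j, (enum_val j).1 \notin codom g -> c ord0 j = 0) -> c = 0.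
Proof.
move=> ig hU hc hout.
pose u := c *m (Psel g)^T.
have cE : c = u *m Psel g.
  apply/rowP => j; rewrite mxE.
  under eq_bigr => i _ do rewrite uE mxE.
  case: (boolP ((enum_val j).1 \in codom g)) => hj.
    move/codomP: hj => [l hl].
    pose i0 := enum_rank ((l, (enum_val j).2) : R).
    have e0 : phi g (enum_val i0) = enum_val j.
      by rewrite /i0 enum_rankK /phi /= -hl; case: (enum_val j).
    rewrite (bigD1 i0) //= big1 ?addr0.
      by rewrite e0 eqxx mulr1 enum_valK.
    move=> i hi; case: eqP => e; last by rewrite mulr0.
    move: hi; rewrite -e0 in e; move/phi_inj: e => /(_ ig) /enum_val_inj ->.
    by rewrite eqxx.
  rewrite (hout j hj) big1 // => i _; case: eqP => e; last by rewrite mulr0.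
  by move: hj; rewrite e /phi /= codom_f.
have hu : u *m (Psel g *m (H rho)^T) = 0 by rewrite mulmxA -cE.
have u0 : u = 0.
  by rewrite -(mulmxK hU u) hu mul0mx.
by rewrite cE u0 mul0mx.
Qed.


Lemma vPsel_out g (v : 'rV[F]_#|{:R}|) j i0 : (enum_val j).1 \notin codom g ->
  (v *m Psel g) i0 j = 0.
Proof.
move=> hj; rewrite mxE big1 // => i _; rewrite mxE; case: eqP => e; last by rewrite mulr0.
by move: hj; rewrite e /phi /= codom_f.
Qed.

Lemma symbol_eq (c c' : 'rV[F]_#|{:C}|) j :
  symbol c (enum_val j).1 = symbol c' (enum_val j).1 -> c ord0 j = c' ord0 j.
Proof.
move=> /ffunP /(_ (enum_val j).2); rewrite !ffunE.
by rewrite -surjective_pairing enum_valK.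
Qed.

End Main.

Lemma ext_inj (n N : nat) (T : {set 'I_n}) (x0 : 'I_n) : (#|T| <= N)%N -> (N <= n)%N ->
  exists g : 'I_N -> 'I_n, injective g /\ forall m, m \in T -> m \in codom g.
Proof.
move=> hT hN.
pose s := enum T ++ enum (~: T).
have us : uniq s by rewrite cat_uniq !enum_uniq /= andbT; apply/hasPn => x; rewrite !mem_enum in_setC => /negbTE ->.
have ss : size s = n by rewrite size_cat -!cardE cardsC card_ord.
exists (fun l => nth x0 s l); split.
  move=> l1 l2 /eqP; rewrite nth_uniq ?ss //; last 2 first.
  - by apply: leq_trans (ltn_ord l1) hN.
  - by apply: leq_trans (ltn_ord l2) hN.
  by move/eqP/val_inj.
move=> m hm.
have hi : (index m s < N)%N.
  rewrite index_cat mem_enum hm.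
  by apply: leq_trans hT; rewrite cardE index_mem mem_enum.
apply/codomP; exists (Ordinal hi) => /=.
by rewrite nth_index // mem_cat mem_enum hm.
Qed.

Lemma trmx_addZ (R : comNzRingType) m n (X Y : 'M[R]_(m, n)) r : (X + r *: Y)^T = X^T + r *: Y^T.
Proof. by apply/matrixP => i j; rewrite !mxE. Qed.

Theorem theorem1 (n k d t s : nat) :
  (1 <= k)%N -> (k < d)%N -> (d <= n - 1)%N -> (1 < t)%N ->
  (1 <= s)%N -> (s <= d - k)%N -> n = ((t - 1) * (d - k + 1) + s)%N ->
  exists Q0 : nat, forall F : finFieldType, (Q0 <= #|{: F}|)%N ->
  forall (a : 'I_(n - k) -> F) (b : 'I_n -> F),
    injective a -> injective b -> (forall r m, a r != b m) ->
    exists rho : F, rho != 0%R /\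
      is_vector_code (@Hmat F n k d t a b rho) (k * (d - k + 1) ^ t) (n - k + 1).
Proof.
move=> hk hkd hdn ht hs1 hs2 hn.
have n0 : (0 < n)%N by lia.
have hkn : (k <= n)%N by lia.
pose M := #|{: row_ix n k d t}|.
exists (n ^ (n - k) * M + 2)%N => F hF a b ia ib hab.
pose I := {ffun 'I_(n-k) -> 'I_n}.
pose A0 (g : I) := Psel F d t g *m (Hmat d t a b 0)^T.
pose A1 (g : I) := Psel F d t g *m (Hmat d t a b 1 - Hmat d t a b 0)^T.
pose p (g : I) := if injectiveb g then lpoly (A0 g) (A1 g) else 1.
have pev : forall (g : I) rho, injective g -> (p g).[rho] = \det (Psel F d t g *m (Hmat d t a b rho)^T).
  move=> g rho ig; rewrite /p (introT (injectiveP g) ig) lpoly_eval /A0 /A1.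
  by rewrite (Hdecomp d t a b rho) trmx_addZ mulmxDr scalemxAr.
have [rho [rho0 hrho]] : exists rho : F, rho != 0 /\ forall g, (p g).[rho] != 0.
  apply: avoid_roots.
  - move=> g; case: (boolP (injectiveb g)) => ig; last by rewrite /p (negbTE ig) oner_eq0.
    apply/eqP => pg0; have := pev g 0 (elimT (injectiveP g) ig); rewrite pg0 horner0 => /esym/eqP.
    have := B0_unit d t ia ib hab (elimT (injectiveP g) ig); rewrite unitmxE unitfE => /negbTE -> //.
  - move=> g; rewrite /p; case: ifP => _; first exact: size_lpoly.
    by rewrite size_poly1.
  - by rewrite card_ffun !card_ord.
have Bunit : forall g : 'I_(n-k) -> 'I_n, injective g -> (Psel F d t g *m (Hmat d t a b rho)^T) \in unitmx.
  move=> g ig; pose g' : I := [ffun l => g l].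
  have ig' : injective g' by move=> x y; rewrite !ffunE => /ig.
  have -> : Psel F d t g = Psel F d t g' by apply/matrixP => i j; rewrite !mxE /phi ffunE.
  by rewrite unitmxE unitfE -pev.
exists rho; split => //.
set H := Hmat d t a b rho.
have dmin : forall c c', in_code H c -> in_code H c' -> c != c' -> (n - k + 1 <= dH c c')%N.
  move=> c c' /eqP hc /eqP hc' ne; rewrite leqNgt; apply/negP => hlt.
  have hT : (#|[set m | symbol c m != symbol c' m]| <= n - k)%N by rewrite -ltnS -(addn1 (n - k)); exact: hlt.
  have [g [ig hg]] := ext_inj (Ordinal n0) hT (leq_subr _ _).
  move: ne; rewrite -subr_eq0 => /eqP; apply.
  apply: (ker_zero ig (Bunit g ig)); first by rewrite mulmxBl hc hc' subrr.
  move=> j hj; rewrite !mxE; apply/eqP; rewrite subr_eq0; apply/eqP.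
  apply: symbol_eq; apply/eqP; rewrite -[_ == _]negbK; apply/negP => hne.
  by move: hj; rewrite hg // inE.
split.
  rewrite /code_dim mxrank_ker mxrank_tr.
  pose g0 := widen_ord (leq_subr k n).
  have ig0 : injective g0 by by move=> x y /(congr1 val) /= /val_inj.
  have hr : \rank H = M.
    apply/eqP; rewrite eqn_leq rank_leq_row /=.
    have := Bunit g0 ig0; rewrite -row_free_unit /row_free => /eqP e.
    rewrite -(mxrank_tr H); apply: leq_trans (mxrankM_maxr (Psel F d t g0) H^T).
    by rewrite e.
  rewrite hr /M !card_prod card_ffun !card_ord -mulnBl.
  by congr (_ * _)%N; lia.
split; first exact: dmin.
pose g0 := widen_ord (leq_subr k n).
have ig0 : injective g0 by by move=> x y /(congr1 val) /= /val_inj.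
have hq : (0 < d - k + 1)%N by lia.
have hm0 : (n.-1 < n)%N by lia.
pose m0 : 'I_n := Ordinal hm0.
pose y0 : word t (d - k + 1) := [ffun _ => Ordinal hq].
pose j0 := enum_rank ((m0, y0) : col_ix n k d t).
pose B := Psel F d t g0 *m H^T.
pose h := (delta_mx 0 j0 : 'rV[F]_#|{: col_ix n k d t}|) *m H^T.
pose v := h *m invmx B.
pose c := (delta_mx 0 j0 : 'rV[F]_#|{: col_ix n k d t}|) - v *m Psel F d t g0.
have m0out : m0 \notin codom g0.
  apply/codomP => [[l /(congr1 val) /= e]]; have := ltn_ord l; lia.
have cc : in_code H c.
  by rewrite /in_code /c mulmxBl -mulmxA -/B /v mulmxKV ?subrr ?Bunit.
have c0 : in_code H 0 by rewrite /in_code mul0mx.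
have cne : c != 0.
  apply/eqP => /rowP /(_ j0); rewrite mxE [X in _ + X]mxE vPsel_out; last by rewrite /j0 enum_rankK.
  rewrite !mxE.
  by rewrite !eqxx subr0 => /eqP; rewrite oner_eq0.
exists c, 0; split => //.
apply/eqP; rewrite eqn_leq dmin // andbT.
have hsub : [set m | symbol c m != symbol 0 m] \subset m0 |: (g0 @: setT).
  apply/subsetP => m; rewrite inE; apply: contraR; rewrite in_setU1 negb_or => /andP [hmm0 hm].
  have hmc : m \notin codom g0.
    apply/codomP => [[l el]]; move: hm; rewrite el; apply/negP/negPn.
    by apply: imset_f; rewrite inE.
  apply/eqP/ffunP => y; rewrite !ffunE [RHS]mxE /c mxE [X in _ + X]mxE vPsel_out; last by rewrite enum_rankK.
  rewrite mxE /= subr0.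
  have : enum_rank ((m, y) : col_ix n k d t) != j0.
    apply: contraNneq hmm0 => /(congr1 enum_val); rewrite !enum_rankK => [[-> _]].
    by [].
  by move/negbTE ->.
apply: (leq_trans (subset_leq_card hsub)).
rewrite cardsU1; have := leq_imset_card g0 setT; rewrite cardsT card_ord.
by case: (_ \notin _) => /=; lia.
Qed.
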